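(* Let $\mathcal{A}$ be a complex subspace arrangement in $\mathbb{C}^l$ and $x_0\in\mathcal{A}$. Let $\mathcal{A}'=\mathcal{A}\setminus\{x_0\}$, $\widetilde{\mathcal{A}''}=\{x_0\cap y\mid y\in\mathcal{A}'\}$ (a finite set of linear subspaces of $x_0$), and let $\mathcal{A}''\subseteq\widetilde{\mathcal{A}''}$ be the set of those elements of $\widetilde{\mathcal{A}''}$ that are not properly contained in another element of $\widetilde{\mathcal{A}''}$. Fix any linear order on $\widetilde{\mathcal{A}''}$ and give $\mathcal{A}''$ the induced order. Then the natural inclusion $D(\mathcal{A}'')\hookrightarrow D(\widetilde{\mathcal{A}''})$ (both complexes formed with ambient space $W=x_0$) is a quasi-isomorphism.
   Context: A (complex) subspace arrangement in $\mathbb{C}^l$ is a finite set $\mathcal{A}$ of complex linear subspaces of $\mathbb{C}^l$ such that there are no distinct $x,y\in\mathcal{A}$ with $x\subset y$. For a finite set $\mathcal{C}$ of linear subspaces of a complex vector space $W$, equipped with a linear order, $D(\mathcal{C})$ denotes the cochain complex over $\mathbb{Q}$ with basis all subsets $\sigma\subseteq\mathcal{C}$, where, writing $\vee\sigma=\bigcap_{x\in\sigma}x$ (with $\vee\emptyset=W$), $\deg\sigma=2\operatorname{codim}_W(\vee\sigma)-|\sigma|$, and for $\sigma=\{x_{i_1},\dots,x_{i_r}\}$ listed in increasing order, $d\sigma=\sum_{j:\vee(\sigma\setminus\{x_{i_j}\})=\vee\sigma}(-1)^j(\sigma\setminus\{x_{i_j}\})$. For $\mathcal{C}'\subseteq\mathcal{C}$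 with induced order, $D(\mathcal{C}')$ is the subcomplex of $D(\mathcal{C})$ spanned by subsets of $\mathcal{C}'$. *)

(* Defs.v *)
From HB Require Import structures.
From mathcomp Require Import all_boot all_order all_algebra.
From mathcomp Require Import reals complex.
Set Implicit Arguments. Unset Strict Implicit. Unset Printing Implicit Defensive.
Import Order.TTheory GRing.Theory Num.Theory.
Local Open Scope ring_scope.

Definition Cspace (R : realType) (l : nat) := 'rV[R[i]]_l.

Definition subspace_arrangement (F : fieldType) (V : vectType F)
  (A : seq {vspace V}) : Prop :=
  uniq A /\ forall x y, x \in A -> y \in A -> (x <= y)%VS -> x = y.

Definition proper_subv (F : fieldType) (V : vectType F) (x y : {vspace V}) : bool :=
  (x <= y)%VS && (x != y).

Section DComplex.
Variables (F : fieldType) (V : vectType F).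
(* Ambient space W, and a linearly ordered finite family c : 'I_n -> subspaces
   of W (the order is the order of 'I_n). *)
Variables (W : {vspace V}) (n : nat) (c : 'I_n -> {vspace V}).

Definition Djoin (s : {set 'I_n}) : {vspace V} :=
  (W :&: \bigcap_(i in s) c i)%VS.

Definition Ddeg (s : {set 'I_n}) : int :=
  ((2 * (\dim W - \dim (Djoin s)))%N)%:Z - (#|s|)%:Z.

(* 1-based position of i in sigma listed in increasing order *)
Definition Dpos (i : 'I_n) (s : {set 'I_n}) : nat := #|[set k in s | (k <= i)%N]|.

(* cochains: Q-linear combinations of basis elements sigma *)
Definition cochain := {ffun {set 'I_n} -> rat}.

(* d sigma = sum_{j : \/(sigma \ x_{i_j}) = \/ sigma} (-1)^j (sigma \ x_{i_j}),
   extended linearly. *)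
Definition Dd (f : cochain) : cochain :=
  [ffun t => \sum_(s : {set 'I_n})
      \sum_(i in s | (t == s :\ i) && (Djoin (s :\ i) == Djoin s))
         (-1) ^+ (Dpos i s) * f s].

Definition homog (k : int) (f : cochain) : Prop :=
  forall s, f s != 0 -> Ddeg s = k.

(* f lies in the subcomplex D(C') spanned by subsets of C' = {c i | P i} *)
Definition supported (P : pred 'I_n) (f : cochain) : Prop :=
  forall s, f s != 0 -> s \subset P.

(* The inclusion D(C') -> D(C) induces an isomorphism on every cohomology group
   H^k = ker d_k / im d_{k-1}. *)
Definition incl_quasi_iso (P : pred 'I_n) : Prop :=
  forall k : int,
    (* surjective on H^k *)
    (forall z, homog k z -> Dd z = 0 ->
       exists z' w, [/\ homog k z', supported P z', Dd z' = 0,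
                        homog (k - 1) w & z - z' = Dd w])
    /\
    (* injective on H^k *)
    (forall z, homog k z -> supported P z -> Dd z = 0 ->
       forall w, homog (k - 1) w -> z = Dd w ->
       exists w', [/\ homog (k - 1) w', supported P w' & z = Dd w']).
End DComplex.

(* Main.v *)
Require Import Defs.
From HB Require Import structures.
From mathcomp Require Import all_boot all_order all_algebra.
From mathcomp Require Import reals complex.
From mathcomp Require Import zify.
Set Implicit Arguments. Unset Strict Implicit. Unset Printing Implicit Defensive.
Import Order.TTheory GRing.Theory Num.Theory.
Local Open Scope ring_scope.

Section Work.
Variables (F : fieldType) (V : vectType F) (W : {vspace V}) (n : nat)
  (c : 'I_n -> {vspace V}).
Local Notation Dj := (Djoin W c).
Local Notation D := (Dd W c).
Local Notation cochain := (cochain n).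

Lemma Dj_U1 (x : 'I_n) (s : {set 'I_n}) : x \notin s -> Dj (x |: s) = (Dj s :&: c x)%VS.
Proof. by move=> xs; rewrite /Djoin big_setU1 //= [(c x :&: _)%VS]capvC capvA. Qed.

Lemma Dj_U1E (x : 'I_n) (s : {set 'I_n}) : x \notin s -> (Dj s == Dj (x |: s)) = (Dj s <= c x)%VS.
Proof.
move=> xs; rewrite Dj_U1 //; apply/eqP/idP => [->|/capv_idPl ->//].
exact: capvSr.
Qed.

Lemma Dj_sub (x : 'I_n) (s : {set 'I_n}) : x \in s -> (Dj s <= W :&: c x)%VS.
Proof.
move=> xs; rewrite -(setD1K xs) Dj_U1 ?setD11 //; rewrite subv_cap; apply/andP; split.
  by apply: subv_trans (capvSl _ _) _; rewrite /Djoin capvSl.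
exact: capvSr.
Qed.

Lemma DposU (x a : 'I_n) (s : {set 'I_n}) : a \notin s -> Dpos x (a |: s) = ((a <= x)%N + Dpos x s)%N.
Proof.
move=> as_; rewrite /Dpos.
case: (leqP a x) => ax.
  have -> : [set k in a |: s | (k <= x)%N] = a |: [set k in s | (k <= x)%N].
    by apply/setP => k; rewrite !inE; case: eqP => // ->; rewrite ax.
  have := cardsU1 a [set k in s | (k <= x)%N]; rewrite inE (negbTE as_) /= => ->.
  done.
have -> // : [set k in a |: s | (k <= x)%N] = [set k in s | (k <= x)%N].
apply/setP => k; rewrite !inE; case: eqP => // ->.
by rewrite leqNgt ax /= andbF.
Qed.

Lemma sgn_sq m : (-1) ^+ m * (-1) ^+ m = 1 :> rat.
Proof. by rewrite -exprD -signr_odd addnn odd_double. Qed.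

Lemma sgn_opp m1 m2 : odd (m1 + m2) -> (-1) ^+ m1 = - (-1) ^+ m2 :> rat.
Proof.
move=> o; have : (-1) ^+ m1 * (-1) ^+ m2 = -1 :> rat.
  by rewrite -exprD -signr_odd o expr1.
move=> h; have := congr1 (fun y => y * (-1) ^+ m2) h.
by rewrite -mulrA sgn_sq mulr1 mulN1r.
Qed.



Lemma sum_nz (I : finType) (P : pred I) (G : I -> rat) :
  \sum_(x | P x) G x != 0 -> exists x, P x /\ G x != 0.
Proof.
move=> h; case: (pickP (fun x => P x && (G x != 0))) => [x /andP[]|none].
  by exists x.
rewrite big1 ?eqxx // in h => x Px; have := none x; rewrite Px /=.
by move/negbFE/eqP.
Qed.


Definition pullsum (f : cochain) (t : {set 'I_n}) : rat :=
  \sum_(x | (x \notin t) && (Dj t <= c x)%VS) (-1) ^+ (Dpos x (x |: t)) * f (x |: t).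

Lemma Dd_pull (f : cochain) (t : {set 'I_n}) : D f t = pullsum f t.
Proof.
rewrite ffunE /pullsum.
rewrite (eq_bigr (fun s : {set 'I_n} => \sum_(x : 'I_n) (if (x \in s) && ((t == s :\ x) &&
   (Dj (s :\ x) == Dj s)) then (-1) ^+ (Dpos x s) * f s else 0)));
  last by move=> s _; rewrite big_mkcond.
rewrite exchange_big /= [RHS]big_mkcond /=; apply: eq_bigr => x _.
rewrite (bigD1 (x |: t)) //= big1 ?addr0.
- rewrite setU11 /=; case: (boolP (x \in t)) => xt /=.
    case: eqP => // E; have := setD11 x (x |: t); by rewrite -E xt.
  by rewrite setU1K // eqxx /= -Dj_U1E.
- move=> s ne; case: ifP => // /andP [xs /andP [/eqP tE _]].
  by move: ne; rewrite tE setD1K // eqxx.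
Qed.

Lemma DdB (f g : cochain) : D (f - g) = D f - D g.
Proof.
apply/ffunP => t; have -> : (D f - D g) t = D f t - D g t by rewrite !ffunE.
rewrite !Dd_pull /pullsum -sumrB.
by apply: eq_bigr => x _; rewrite !ffunE mulrBr.
Qed.

Lemma le_sum1 (x y : 'I_n) : x != y -> ((x <= y)%N + (y <= x)%N = 1)%N.
Proof.
move=> xy; case: (ltngtP x y) => // /val_inj E.
by rewrite E eqxx in xy.
Qed.

Lemma DdK (f : cochain) : D (D f) = 0.
Proof.
apply/ffunP => t; rewrite [RHS]ffunE Dd_pull /pullsum.
pose C x y := [&& x \notin t, (Dj t <= c x)%VS, y \notin x |: t & (Dj (x |: t) <= c y)%VS].
pose G x y := if C x y then (-1) ^+ (Dpos x (x |: t)) * ((-1) ^+ (Dpos y (y |: (x |: t)))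
   * f (y |: (x |: t))) else 0.
rewrite big_mkcond (eq_bigr (fun x => \sum_y G x y)); last first.
  move=> x _; case: ifP => cx.
    rewrite Dd_pull /pullsum mulr_sumr big_mkcond.
    apply: eq_bigr => y _; rewrite /G /C; move: cx => /andP[-> ->] /=.
    by case: ifP.
  rewrite big1 // => y _; rewrite /G /C.
  by case: (x \notin t) (Dj t <= c x)%VS cx => [] [].
have CE x y : C x y = [&& x \notin t, y \notin t, x != y, (Dj t <= c x)%VS & (Dj t <= c y)%VS].
  rewrite /C; case: (boolP (x \notin t)) => //= xt; case: (boolP (Dj t <= c x)%VS) => //= tx.
    rewrite Dj_U1 // (capv_idPl tx) !inE negb_or [y == x]eq_sym.
    by case: (x != y); case: (y \in t); case: (Dj t <= c y)%VS.

  by rewrite !andbF.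
have GN x y : G x y = - G y x.
  rewrite /G !CE; case: (boolP (x == y)) => [/eqP ->|xy]; first by rewrite !eqxx /= !andbF oppr0.
  rewrite [y == x]eq_sym (negbTE xy) /=.
  have -> : [&& y \notin t, x \notin t, (Dj t <= c y)%VS & (Dj t <= c x)%VS] =
    [&& x \notin t, y \notin t, (Dj t <= c x)%VS & (Dj t <= c y)%VS].
    by case: (x \in t); case: (y \in t); case: (Dj t <= c x)%VS; case: (Dj t <= c y)%VS.
  case: ifP => [/and4P [xt yt tx ty]|_]; last by rewrite oppr0.
  rewrite [y |: (x |: t)]setUCA !mulrA -mulNr; congr (_ * _).
  rewrite -!exprD; apply: sgn_opp.
  rewrite (@DposU y x (y |: t)); last by rewrite !inE negb_or xy xt.
  have -> : Dpos x (x |: (y |: t)) = ((y <= x)%N + Dpos x (x |: t))%N.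
    by rewrite setUCA DposU // !inE negb_or eq_sym xy yt.
  have := le_sum1 xy.
  set a := Dpos x (x |: t); set b := Dpos y (y |: t).
  move: (x <= y)%N (y <= x)%N => [] [] //= _.
    have -> : (a + (1 + b) + (b + (0 + a)) = (a + b).*2 + 1)%N by lia.
    by rewrite addn1 /= odd_double.
  have -> : (a + (0 + b) + (b + (1 + a)) = (a + b).*2 + 1)%N by lia.
  by rewrite addn1 /= odd_double.
set S := \sum_x \sum_y G x y.
have SN : S = - S.
  rewrite {1}/S exchange_big /= -sumrN; apply: eq_bigr => y _.
  rewrite -sumrN; apply: eq_bigr => x _; exact: GN.
have : S *+ 2 == 0 by rewrite mulr2n {1}SN addNr.
by rewrite mulrn_eq0 /= => /eqP.
Qed.

Lemma ffunB (f g : cochain) t : (f - g) t = f t - g t.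
Proof. by rewrite !ffunE. Qed.
Lemma ffunD (f g : cochain) t : (f + g) t = f t + g t.
Proof. by rewrite !ffunE. Qed.
Lemma ffun0 t : (0 : cochain) t = 0.
Proof. by rewrite !ffunE. Qed.

Lemma DdD (f g : cochain) : D (f + g) = D f + D g.
Proof.
apply/ffunP => t; rewrite ffunD !Dd_pull /pullsum -big_split.
by apply: eq_bigr => x _; rewrite ffunD mulrDr.
Qed.

Lemma Dd0 : D 0 = 0.
Proof. by apply/ffunP => t; rewrite Dd_pull /pullsum ffun0 big1 // => x _; rewrite ffun0 mulr0. Qed.

Lemma Ddeg_U (x : 'I_n) (t : {set 'I_n}) : x \notin t -> (Dj t <= c x)%VS ->
  Ddeg W c (x |: t) = Ddeg W c t - 1.
Proof.
move=> xt tx; rewrite /Ddeg Dj_U1 // (capv_idPl tx) cardsU1 xt /=.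
lia.
Qed.

Lemma Dd_homog k f : homog W c k f -> homog W c (k + 1) (D f).
Proof.
move=> hf t; rewrite Dd_pull /pullsum => /sum_nz [x [/andP [xt tx] h]].
have : f (x |: t) != 0 by apply: contraNneq h => ->; rewrite mulr0.
by move/hf; rewrite Ddeg_U // => <-; rewrite subrK.
Qed.

Lemma homogD k f g : homog W c k f -> homog W c k g -> homog W c k (f + g).
Proof.
move=> hf hg t; rewrite ffunD; case: (eqVneq (f t) 0) => [f0|/hf //].
by rewrite f0 add0r; exact: hg.
Qed.

Lemma homogN k f : homog W c k f -> homog W c k (- f).
Proof. by move=> hf t; rewrite !ffunE oppr_eq0; exact: hf. Qed.

Lemma homogB k f g : homog W c k f -> homog W c k g -> homog W c k (f - g).
Proof. by move=> hf hg; apply: homogD => //; exact: homogN. Qed.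

Lemma homog0 k : homog W c k 0.
Proof. by move=> t; rewrite ffun0 eqxx. Qed.

Lemma Dd_supp (Q : pred 'I_n) f : supported Q f -> supported Q (D f).
Proof.
move=> sf t; rewrite Dd_pull /pullsum => /sum_nz [x [/andP [xt _] h]].
have : f (x |: t) != 0 by apply: contraNneq h => ->; rewrite mulr0.
by move/sf; apply: subset_trans; exact: subsetUr.
Qed.

Lemma suppD (Q : pred 'I_n) f g : supported Q f -> supported Q g -> supported Q (f + g).
Proof.
move=> hf hg t; rewrite ffunD; case: (eqVneq (f t) 0) => [f0|/hf //].
by rewrite f0 add0r; exact: hg.
Qed.

Lemma suppN (Q : pred 'I_n) f : supported Q f -> supported Q (- f).
Proof. by move=> hf t; rewrite !ffunE oppr_eq0; exact: hf. Qed.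

Lemma suppB (Q : pred 'I_n) f g : supported Q f -> supported Q g -> supported Q (f - g).
Proof. by move=> hf hg; apply: suppD => //; exact: suppN. Qed.

Lemma supp0 (Q : pred 'I_n) : supported Q 0.
Proof. by move=> t; rewrite ffun0 eqxx. Qed.

Lemma supp_mono (P Q : pred 'I_n) f : (forall x, P x -> Q x) -> supported P f -> supported Q f.
Proof.
move=> PQ sf t /sf /subsetP h; apply/subsetP => x /h xP; exact: PQ.
Qed.

Section Homotopy.
Variables (i j : 'I_n).
Hypothesis ij : i != j.
Hypothesis cij : (W :&: c i <= c j)%VS.

Definition hop (f : cochain) : cochain := [ffun t : {set 'I_n} => if (i \in t) && (j \in t)
  then (-1) ^+ (Dpos j t) * f (t :\ j) else 0].

Lemma Dj_ij (t : {set 'I_n}) : i \in t -> (Dj t <= c j)%VS.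
Proof. by move=> it; exact: subv_trans (Dj_sub it) cij. Qed.

Lemma hop_key f (t : {set 'I_n}) : i \in t -> D (hop f) t + hop (D f) t = f t.
Proof.
move=> it; rewrite Dd_pull /pullsum [hop (D f) t]ffunE it /=.
case: (boolP (j \in t)) => jt /=.
- rewrite Dd_pull /pullsum.
  have jtj : j \notin t :\ j by rewrite setD11.
  have itj : i \in t :\ j by rewrite in_setD1 ij it.
  have Djt : Dj (t :\ j) = Dj t.
    by rewrite -{2}(setD1K jt) Dj_U1 // (capv_idPl (Dj_ij itj)).
  rewrite Djt [\sum_(x | (x \notin t :\ j) && _) _](bigD1 j) /=; last by apply/andP; split; [exact: jtj|exact: Dj_ij].
  rewrite setD1K // mulrDr mulrA sgn_sq mul1r mulr_sumr.
  set A := \sum_(x | _) _.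
  suff -> : \sum_(y | ((y \notin t :\ j) && (Dj t <= c y)%VS) && (y != j))
     (-1) ^+ Dpos j t * ((-1) ^+ Dpos y (y |: t :\ j) * f (y |: t :\ j)) = - A.
    by rewrite addrCA addrN addr0.
  rewrite /A -sumrN; apply: eq_big => [y|y /andP [/andP [ytj ty] yj]].
    rewrite in_setD1 negb_and negbK.
    case: (eqVneq y j) => [->|] /=; first by rewrite jt !andbF.
    by rewrite andbT.
  have yt : y \notin t by move: ytj; rewrite in_setD1 yj.
  have E : (y |: t) :\ j = y |: (t :\ j).
    apply/setP => k; rewrite !inE; case: (eqVneq k j) => [->|]; last by [].
    by rewrite eq_sym (negbTE yj).
  rewrite ffunE !inE it jt !orbT /= E !mulrA -!exprD -mulNr; congr (_ * _).
  apply: sgn_opp.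
  rewrite (@DposU j y t) //.
  have -> : Dpos y (y |: t) = ((j <= y)%N + Dpos y (y |: t :\ j))%N.
    rewrite -{1}(setD1K jt) setUCA DposU //.
    by rewrite !inE eqxx /= orbF eq_sym.
  have := le_sum1 yj.
  set a := Dpos j t; set b := Dpos y (y |: t :\ j).
  move: (y <= j)%N (j <= y)%N => [] [] //= _.
    have -> : (a + b + (0 + b + (1 + a)) = (a + b).*2 + 1)%N by lia.
    by rewrite addn1 /= odd_double.
  have -> : (a + b + (1 + b + (0 + a)) = (a + b).*2 + 1)%N by lia.
  by rewrite addn1 /= odd_double.
- rewrite addr0 (bigD1 j) /=; last by apply/andP; split; [exact: jt|exact: Dj_ij].
  rewrite big1 ?addr0.
    by rewrite ffunE !inE it eqxx orbT /= setU1K // mulrA sgn_sq mul1r.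
  move=> x /andP [_ xj]; rewrite ffunE !inE [j == x]eq_sym (negbTE xj) (negbTE jt).
  by rewrite andbF mulr0.
Qed.

Lemma hop_supp (Q : pred 'I_n) f : Q j -> supported Q f -> supported Q (hop f).
Proof.
move=> Qj sf t; rewrite ffunE; case: ifP => [/andP[it jt]|]; last by rewrite eqxx.
move=> h; have : f (t :\ j) != 0 by apply: contraNneq h => ->; rewrite mulr0.
move/sf => sub; apply/subsetP => x xt; case: (eqVneq x j) => [->//|xj].
by apply: (subsetP sub); rewrite in_setD1 xj xt.
Qed.

Lemma hop_homog k f : homog W c k f -> homog W c (k - 1) (hop f).
Proof.
move=> hf t; rewrite ffunE; case: ifP => [/andP[it jt]|]; last by rewrite eqxx.
move=> h; have : f (t :\ j) != 0 by apply: contraNneq h => ->; rewrite mulr0.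
have itj : i \in t :\ j by rewrite in_setD1 ij it.
move/hf => <-; rewrite -{1}(setD1K jt) Ddeg_U //; first by rewrite setD11.
exact: Dj_ij.
Qed.

Lemma hop0 : hop 0 = 0.
Proof. by apply/ffunP => t; rewrite !ffunE; case: ifP; rewrite ?mulr0. Qed.

End Homotopy.

Definition qi (P Q : pred 'I_n) := forall k : int,
  (forall z, homog W c k z -> supported Q z -> D z = 0 ->
     exists z' w, [/\ homog W c k z', supported P z', D z' = 0,
        homog W c (k - 1) w & z - z' = D w]) /\
  (forall z, homog W c k z -> supported P z -> D z = 0 ->
     forall w, homog W c (k - 1) w -> supported Q w -> z = D w ->
     exists w', [/\ homog W c (k - 1) w', supported P w' & z = D w']).

Lemma qi_sub (P Q : pred 'I_n) : (forall x, Q x -> P x) -> qi P Q.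
Proof.
move=> QP k; split.
  move=> z hz sz dz; exists z; exists 0; split => //; rewrite ?Dd0 ?subrr //.
  - exact: supp_mono sz.
  - exact: homog0.
move=> z hz sz dz w hw sw zw; exists w; split => //; exact: supp_mono sw.
Qed.

Lemma qi_trans (P Q R : pred 'I_n) : (forall x, P x -> Q x) ->
  qi P Q -> qi Q R -> qi P R.
Proof.
move=> PQ h1 h2 k; have [s1 i1] := h1 k; have [s2 i2] := h2 k; split.
  move=> z hz sz dz; have [z1 [w1 [hz1 sz1 dz1 hw1 e1]]] := s2 z hz sz dz.
  have [z2 [w2 [hz2 sz2 dz2 hw2 e2]]] := s1 z1 hz1 sz1 dz1.
  exists z2; exists (w1 + w2); split => //.
  - exact: homogD.
  - by rewrite DdD -e1 -e2 addrA subrK.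
move=> z hz sz dz w hw sw zw.
have sQ : supported Q z by apply: supp_mono sz.
have [w1 [hw1 sw1 e1]] := i2 z hz sQ dz w hw sw zw.
exact: i1 z hz sz dz w1 hw1 sw1 e1.
Qed.

Lemma qi_step (P Q : pred 'I_n) (i j : 'I_n) : i != j -> (W :&: c i <= c j)%VS ->
  (forall x, Q x = P x || (x == i)) -> ~~ P i -> P j -> qi P Q.
Proof.
move=> ij cij QP nPi Pj.
have Qj : Q j by rewrite QP Pj.
have toP f : supported Q f -> (forall t : {set 'I_n}, i \in t -> f t = 0) -> supported P f.
  move=> sf fi t ft; have [it|it] := boolP (i \in t); first by rewrite fi ?eqxx in ft.
  apply/subsetP => x xt; have := subsetP (sf t ft) x xt.
  rewrite unfold_in QP => /orP [//|/eqP xi]; by move: it; rewrite -xi xt.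
move=> k; split.
  move=> z hz sz dz; exists (z - D (hop i j z)); exists (hop i j z).
  have hw := hop_homog ij cij hz.
  split => //.
  - apply: homogB => //; have := Dd_homog hw; by rewrite subrK.
  - apply: toP; first by apply: suppB => //; apply: Dd_supp; exact: hop_supp.
    move=> t it; rewrite ffunB -{1}(hop_key ij cij z it) addrC addKr dz hop0 ffun0 //.
  - by rewrite DdB dz DdK subrr.
  - by rewrite opprB addrC subrK.
move=> z hz sz dz w hw sw zw.
exists (w - D (hop i j w)); split.
- apply: homogB => //; have := Dd_homog (hop_homog ij cij hw); by rewrite subrK.
- apply: toP; first by apply: suppB => //; apply: Dd_supp; exact: hop_supp.
  move=> t it; rewrite ffunB -{1}(hop_key ij cij w it) addrC addKr -zw ffunE it /=.
  case: ifP => // jt; suff -> : z (t :\ j) = 0 by rewrite mulr0.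
  apply/eqP; apply: contraT => /sz /subsetP /(_ i).
  by rewrite in_setD1 ij it => /(_ isT); rewrite unfold_in (negbTE nPi).
- by rewrite DdB -zw DdK subr0.
Qed.

Lemma qi_all (P : pred 'I_n) :
  (forall i, ~~ P i -> exists j, [/\ P j, i != j & (W :&: c i <= c j)%VS]) ->
  forall Q : pred 'I_n, (forall x, P x -> Q x) -> qi P Q.
Proof.
move=> hP Q; move: {2}#|[pred x | Q x && ~~ P x]| (leqnn #|[pred x | Q x && ~~ P x]|) => m.
elim: m Q => [|m IH] Q hm PQ.
  apply: qi_sub => x Qx; apply: contraTT hm => nPx.
  by rewrite -ltnNge (cardD1x (j := x)) //= Qx nPx.
case: (pickP [pred x | Q x && ~~ P x]) => [i /andP [Qi nPi]|none]; last first.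
  apply: qi_sub => x Qx; apply: contraFT (none x) => nPx; by rewrite /= Qx nPx.
have [j [Pj ij cij]] := hP i nPi.
pose Q' := [pred x | Q x && (x != i)].
have PQ' : forall x, P x -> Q' x.
  move=> x Px; rewrite /Q' /= PQ //=; apply: contraTneq Px => ->; exact: nPi.
apply: (qi_trans PQ'); first apply: IH => //.
  move: hm; rewrite (cardD1x (j := i)) /= ?Qi ?nPi // add1n ltnS.
  apply: leq_trans; apply: subset_leq_card; apply/subsetP => x.
  by rewrite !inE /= andbAC.
apply: (qi_step ij cij).
- move=> x; rewrite /Q' /=; case: (eqVneq x i) => [->|]; by rewrite ?Qi ?orbT ?andbT ?orbF.
- by rewrite /Q' /= eqxx andbF.
- by rewrite /Q' /= PQ // eq_sym.
Qed.

End Work.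

Lemma dim_lt (K : fieldType) (vT : vectType K) (U V : {vspace vT}) :
  (U <= V)%VS -> U != V -> (\dim U < \dim V)%N.
Proof. by move=> h ne; have [le e] := dimv_leqif_eq h; rewrite ltn_neqAle le andbT e. Qed.

Theorem corollary2p2 (R : realType) (l : nat)
  (A : seq {vspace Cspace R l}) (x0 : {vspace Cspace R l})
  (t : seq {vspace Cspace R l}) :
  subspace_arrangement A -> x0 \in A ->
  uniq t -> t =i [seq (x0 :&: y)%VS | y <- A & y != x0] ->
  incl_quasi_iso x0 (fun i : 'I_(size t) => nth 0%VS t i)
    (fun i : 'I_(size t) => ~~ has (proper_subv (nth 0%VS t i)) t).
Proof.
move=> _ _ _ _.
set c := (fun i : 'I_(size t) => nth 0%VS t i).
set P := (fun i : 'I_(size t) => ~~ has (proper_subv (nth 0%VS t i)) t).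
have ordof y : y \in t -> exists k : 'I_(size t), c k = y.
  move=> yt; exists (Ordinal (etrans (index_mem y t) yt)); exact: nth_index.
have hqi : qi x0 c P predT.
  apply: qi_all => // i; rewrite /P negbK => /hasP [y yt /andP [ciy ney]].
  have [k ck] := ordof y yt.
  case: (@arg_maxnP _ i (fun k => (c i <= c k)%VS) (fun k => \dim (c k)) (subvv _)).
  move=> j cij jmax.
  exists j; split.
  - apply/hasPn => y' y't; apply/negP => /andP [cjy' ne'].
    have [k' ck'] := ordof y' y't.
    have := jmax k'; rewrite /= ck' (subv_trans cij cjy') => /(_ isT).
    by rewrite leqNgt dim_lt.
  - apply/eqP => eij; have := jmax k; rewrite /= ck ciy => /(_ isT).
    by rewrite -eij leqNgt dim_lt.
  - exact: subv_trans (capvSr _ _) cij.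
have sall f : supported predT f by move=> s _; apply/subsetP.
move=> k; have [s1 i1] := hqi k; split.
- move=> z hz dz; have [z' [w [hz' sz' dz' hw e]]] := s1 z hz (sall _ z) dz.
  by exists z', w.
- move=> z hz sz dz w hw e; exact: i1 z hz sz dz w hw (sall _ w) e.
Qed.
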